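(* There is an absolute constant $C$ such that the following holds. Let $G=(V,E)$ be an $m_\ell \times m_s$ grid graph ($m_\ell\ge m_s$, $m_\ell \ge 3$, $m_s\ge 2$) with every vertex occupied by a robot, and let $E' \subseteq E$ be any set of pairwise vertex-disjoint edges. Then there is a sequence of at most $C$ valid synchronous moves after which, for every edge $(v_1,v_2)\in E'$, the robot initially at $v_1$ is at $v_2$ and the robot initially at $v_2$ is at $v_1$, while every robot initially at a vertex not covered by $E'$ is back at its initial vertex. (This operation is denoted $\textsc{flip}(E')$.)
   Context: The $m_\ell \times m_s$ grid graph has vertex set $\{1,\dots,m_\ell\}\times\{1,\dots,m_s\}$ with edges between vertices at $\ell_1$-distance 1. Valid synchronous moves: from step $t$ to $t+1$ each robot either stays put or moves to an adjacent vertex, subject to (i) no two robots occupying the same vertex afterwards and (ii) no two robots traversing the same edge in opposite directions. *)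

(* Defs.v *)
From mathcomp Require Import all_boot.
Set Implicit Arguments. Unset Strict Implicit. Unset Printing Implicit Defensive.

Definition gvert (ml ms : nat) : finType := ('I_ml * 'I_ms)%type.

Definition gadj (ml ms : nat) (u v : gvert ml ms) : bool :=
  ((u.1 == v.1 :> nat) && ((u.2.+1 == v.2 :> nat) || (v.2.+1 == u.2 :> nat))) ||
  ((u.2 == v.2 :> nat) && ((u.1.+1 == v.1 :> nat) || (v.1.+1 == u.1 :> nat))).

(* Robots are labelled by their initial vertex (every vertex is occupied);
   a configuration maps each robot to its current vertex. *)
Definition config (ml ms : nat) := gvert ml ms -> gvert ml ms.

Definition valid_move (ml ms : nat) (p q : config ml ms) : Prop :=
  (forall r, q r = p r \/ gadj (p r) (q r)) /\
  (forall r1 r2, q r1 = q r2 -> r1 = r2) /\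
  (forall r1 r2, p r1 <> p r2 -> q r1 = p r2 -> q r2 <> p r1).

Definition disjoint_edges (ml ms : nat) (M : {set gvert ml ms * gvert ml ms}) : Prop :=
  (forall e, e \in M -> gadj e.1 e.2) /\
  (forall e f, e \in M -> f \in M -> e <> f ->
     [/\ e.1 <> f.1, e.1 <> f.2, e.2 <> f.1 & e.2 <> f.2]).

Definition covered (ml ms : nat) (M : {set gvert ml ms * gvert ml ms}) (v : gvert ml ms) : Prop :=
  exists2 e, e \in M & (v = e.1 \/ v = e.2).

Definition flip_result (ml ms : nat) (M : {set gvert ml ms * gvert ml ms}) (c : config ml ms) : Prop :=
  (forall e, e \in M -> c e.1 = e.2 /\ c e.2 = e.1) /\
  (forall v, ~ covered M v -> c v = v).

(* Main.v *)
Require Import Defs.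
From mathcomp Require Import all_boot zify.
Set Implicit Arguments. Unset Strict Implicit. Unset Printing Implicit Defensive.

Definition tapp (t : seq nat) (n : nat) : nat := nth n t n.
Fixpoint lw (w : seq (seq nat)) (s n : nat) : nat :=
  if s is s'.+1 then tapp (nth [::] w s') (lw w s' n) else n.
Definition ladj (n m : nat) : bool :=
  ((n %% 3 == m %% 3) && (((n %/ 3).+1 == m %/ 3) || ((m %/ 3).+1 == n %/ 3))) ||
  ((n %/ 3 == m %/ 3) && (((n %% 3).+1 == m %% 3) || ((m %% 3).+1 == n %% 3))).
Definition six := iota 0 6.
Definition lgood (t : seq nat) : bool :=
  all (fun n => [&& tapp t n < 6, (tapp t n == n) || ladj n (tapp t n),
                 (tapp t (tapp t n) == n) ==> (tapp t n == n) &
                 all (fun m => (tapp t n == tapp t m) ==> (n == m)) six]) six.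

Definition keys : seq (nat * nat) := [:: (0,1); (0,3); (1,2); (1,4); (2,5); (3,4); (4,5)].
Definition gads : seq (seq (seq nat)) := [::
 [:: [:: 1; 2; 5; 0; 3; 4]; [:: 0; 4; 1; 3; 5; 2]; [:: 3; 0; 2; 4; 1; 5]];
 [:: [:: 1; 2; 5; 0; 3; 4]; [:: 0; 4; 1; 3; 5; 2]; [:: 3; 0; 1; 4; 5; 2]; [:: 0; 2; 5; 3; 1; 4]; [:: 1; 4; 2; 0; 3; 5]];
 [:: [:: 0; 4; 1; 3; 5; 2]; [:: 3; 0; 2; 4; 1; 5]; [:: 1; 2; 5; 0; 3; 4]];
 [:: [:: 0; 2; 5; 3; 1; 4]; [:: 3; 0; 1; 4; 5; 2]; [:: 1; 4; 2; 0; 3; 5]];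
 [:: [:: 0; 2; 5; 3; 1; 4]; [:: 0; 2; 5; 3; 1; 4]; [:: 1; 4; 2; 0; 3; 5]; [:: 3; 0; 1; 4; 5; 2]; [:: 0; 4; 1; 3; 5; 2]];
 [:: [:: 3; 0; 1; 4; 5; 2]; [:: 0; 2; 5; 3; 1; 4]; [:: 1; 4; 2; 0; 3; 5]];
 [:: [:: 0; 2; 5; 3; 1; 4]; [:: 1; 4; 2; 0; 3; 5]; [:: 3; 0; 1; 4; 5; 2]]].
Definition gad (k : nat * nat) : seq (seq nat) := nth [::] gads (index k keys).
Definition D := 5.

Lemma gads_good : all (all lgood) gads.
Proof. by vm_compute. Qed.

Lemma gad_ok_b : all (fun i => all (fun j => ((i < j) && ladj i j) ==>
   all (fun n => lw (gad (i,j)) D n == (if n == i then j else if n == j then i else n)) six) six) six.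
Proof. by vm_compute. Qed.

Lemma ladj_sym_b : all (fun n => all (fun m => ladj n m == ladj m n) six) six.
Proof. by vm_compute. Qed.

Lemma lgood_nil : lgood [::].
Proof. by vm_compute. Qed.

Lemma lgood_any k s : lgood (nth [::] (gad k) s).
Proof.
rewrite /gad.
have [hi|hi] := ltnP (index k keys) (size gads); last first.
  by rewrite nth_default //= nth_default // lgood_nil.
have hw := mem_nth [::] hi.
have /allP/(_ _ hw) hall := gads_good.
have [hs|hs] := ltnP s (size (nth [::] gads (index k keys))); last first.
  by rewrite nth_default // lgood_nil.
exact: (allP hall _ (mem_nth [::] hs)).
Qed.

Lemma lgoodP t n : lgood t -> n < 6 ->
  [/\ tapp t n < 6, (tapp t n = n) \/ ladj n (tapp t n),
      (tapp t (tapp t n) = n -> tapp t n = n) &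
      forall m, m < 6 -> tapp t n = tapp t m -> n = m].
Proof.
move=> /allP H hn.
have /H /and4P [h1 h2 h3 h4] : n \in six by rewrite mem_iota.
split => //.
- by case/orP: h2 => [/eqP|]; auto.
- by move=> e; move/implyP: h3; rewrite e eqxx => /(_ isT) /eqP.
- move=> m hm e; have /(allP h4) : m \in six by rewrite mem_iota.
  by rewrite e eqxx => /eqP.
Qed.

Lemma gad_ok i j n : i < j -> j < 6 -> ladj i j -> n < 6 ->
  lw (gad (i,j)) D n = (if n == i then j else if n == j then i else n).
Proof.
move=> hij hj ha hn.
have hi : i \in six by rewrite mem_iota; lia.
have hj' : j \in six by rewrite mem_iota; lia.
have hn' : n \in six by rewrite mem_iota; lia.
move/allP: gad_ok_b => /(_ _ hi) /allP /(_ _ hj') /implyP.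
rewrite hij ha => /(_ isT) /allP /(_ _ hn') /eqP //.
Qed.

Lemma ladj_sym n m : n < 6 -> m < 6 -> ladj n m = ladj m n.
Proof.
move=> hn hm.
have hn' : n \in six by rewrite mem_iota; lia.
have hm' : m \in six by rewrite mem_iota; lia.
by move/allP: ladj_sym_b => /(_ _ hn') /allP /(_ _ hm') /eqP.
Qed.
Set Implicit Arguments. Unset Strict Implicit. Unset Printing Implicit Defensive.

Definition inrect ml ms (a v : gvert ml ms) : bool :=
  [&& a.1 <= v.1, v.1 < a.1 + 3, a.2 <= v.2, v.2 < a.2 + 2, a.1 + 3 <= ml & a.2 + 2 <= ms].
Definition loc ml ms (a v : gvert ml ms) : nat := (v.1 - a.1) + 3 * (v.2 - a.2).
Definition shiftv ml ms (a : gvert ml ms) (n : nat) : gvert ml ms :=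
  (insubd a.1 (a.1 + n %% 3), insubd a.2 (a.2 + n %/ 3)).

Lemma vert_eq ml ms (u v : gvert ml ms) : u.1 = v.1 :> nat -> u.2 = v.2 :> nat -> u = v.
Proof. by case: u v => [u1 u2] [v1 v2] /= /val_inj -> /val_inj ->. Qed.

Lemma shiftv1 ml ms (a : gvert ml ms) n : a.1 + 3 <= ml -> (shiftv a n).1 = a.1 + n %% 3 :> nat.
Proof. case: a => a1 a2 /= h; rewrite /shiftv /= val_insubd; case: ifP => // /negbT; rewrite -leqNgt => H; exfalso; move: H; lia. Qed.
Lemma shiftv2 ml ms (a : gvert ml ms) n : a.2 + 2 <= ms -> n < 6 -> (shiftv a n).2 = a.2 + n %/ 3 :> nat.
Proof. case: a => a1 a2 /= h hn; rewrite /shiftv /= val_insubd; case: ifP => // /negbT; rewrite -leqNgt => H; exfalso; move: H; lia. Qed.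

Lemma K2 ml ms (a v : gvert ml ms) : inrect a v -> loc a v < 6 /\ shiftv a (loc a v) = v.
Proof.
case: a => a1 a2; case: v => v1 v2.
rewrite /inrect /loc /= => /and5P [h1 h2 h3 h4 /andP [h5 h6]].
have hl : v1 - a1 + 3 * (v2 - a2) < 6 by lia.
split => //; apply: vert_eq; [rewrite shiftv1 // | rewrite shiftv2 //] => /=; lia.
Qed.

Lemma K3 ml ms (a v : gvert ml ms) n : inrect a v -> n < 6 ->
  inrect a (shiftv a n) /\ loc a (shiftv a n) = n.
Proof.
case: a => a1 a2; case: v => v1 v2.
rewrite /inrect /= => /and5P [h1 h2 h3 h4 /andP [h5 h6]] hn.
rewrite /loc shiftv1 // shiftv2 //; split; [|lia].
rewrite /inrect /=; lia.
Qed.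

Lemma K4 ml ms (a u w : gvert ml ms) : inrect a u -> inrect a w -> loc a u = loc a w -> u = w.
Proof. by move=> /K2 [_ {2}<-] /K2 [_ {2}<-] ->. Qed.

Lemma K5 ml ms (a u w : gvert ml ms) : inrect a u -> inrect a w ->
  ladj (loc a u) (loc a w) = gadj u w.
Proof.
case: a => a1 a2; case: u => u1 u2; case: w => w1 w2.
rewrite /inrect /ladj /gadj /loc /= => /and5P [h1 h2 h3 h4 /andP [h5 h6]] /and5P [g1 g2 g3 g4 /andP [g5 g6]].
apply/idP/idP; lia.
Qed.
Set Implicit Arguments. Unset Strict Implicit. Unset Printing Implicit Defensive.

Definition anc1 ml ms (e : gvert ml ms * gvert ml ms) : nat := minn (minn e.1.1 e.2.1) (ml - 3).
Definition anc2 ml ms (e : gvert ml ms * gvert ml ms) : nat := minn (minn e.1.2 e.2.2) (ms - 2).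
Definition locE ml ms (e : gvert ml ms * gvert ml ms) (u : gvert ml ms) : nat :=
  (u.1 - anc1 e) + 3 * (u.2 - anc2 e).
Definition ltype ml ms (e : gvert ml ms * gvert ml ms) : nat * nat :=
  (minn (locE e e.1) (locE e e.2), maxn (locE e e.1) (locE e e.2)).
Definition ph ml ms (e : gvert ml ms * gvert ml ms) : nat :=
  anc1 e %% 3 + 3 * (anc2 e %% 2 + 2 * ((ltype e).1 + 6 * (ltype e).2)).
Definition kind (p : nat) : nat * nat := ((p %/ 6) %% 6, p %/ 36).

Definition act ml ms (M : {set gvert ml ms * gvert ml ms}) (p : nat) (a : gvert ml ms) : bool :=
  [exists e in M, [&& ph e == p, anc1 e == a.1 & anc2 e == a.2]].
Definition pickp ml ms (M : {set gvert ml ms * gvert ml ms}) (p : nat) (v : gvert ml ms) :=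
  [pick a | inrect a v && act M p a].
Definition mapg ml ms (M : {set gvert ml ms * gvert ml ms}) (p : nat) (g : nat -> nat) (v : gvert ml ms) :=
  match pickp M p v with Some a => shiftv a (g (loc a v)) | None => v end.

Lemma act_cls ml ms (M : {set gvert ml ms * gvert ml ms}) p a :
  act M p a -> a.1 %% 3 = p %% 3 /\ a.2 %% 2 = (p %/ 3) %% 2.
Proof.
case/existsP => e /and4P [_ /eqP <- /eqP <- /eqP <-]; rewrite /ph; lia.
Qed.

Lemma K1 ml ms (M : {set gvert ml ms * gvert ml ms}) p a b v :
  act M p a -> act M p b -> inrect a v -> inrect b v -> a = b.
Proof.
move=> /act_cls [ha1 ha2] /act_cls [hb1 hb2].
move: ha1 ha2 hb1 hb2; case: a => a1 a2; case: b => b1 b2; case: v => v1 v2.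
rewrite /inrect /= => ha1 ha2 hb1 hb2 /and5P [h1 h2 h3 h4 _] /and5P [g1 g2 g3 g4 _].
apply: vert_eq => /=; lia.
Qed.

Lemma K6 ml ms (M : {set gvert ml ms * gvert ml ms}) p a v :
  inrect a v -> act M p a -> pickp M p v = Some a.
Proof.
move=> h1 h2; rewrite /pickp; case: pickP => [b /andP [g1 g2] | H].
  by congr Some; apply: (K1 g2 h2 g1 h1).
by move: (H a); rewrite h1 h2.
Qed.

Lemma K7 ml ms (M : {set gvert ml ms * gvert ml ms}) p a v :
  pickp M p v = Some a -> inrect a v /\ act M p a.
Proof.
rewrite /pickp; case: pickP => [b /andP [g1 g2] [<-] | //]. by [].
Qed.

Lemma mapg_pick ml ms (M : {set gvert ml ms * gvert ml ms}) p g v :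
  (forall n, n < 6 -> g n < 6) -> pickp M p (mapg M p g v) = pickp M p v.
Proof.
move=> hg; rewrite /mapg; case E: (pickp M p v) => [a|] //.
have [h1 h2] := K7 E.
have [h3 _] := K3 h1 (hg _ (proj1 (K2 h1))).
exact: K6.
Qed.

Lemma mapg_comp ml ms (M : {set gvert ml ms * gvert ml ms}) p g1 g2 v :
  (forall n, n < 6 -> g1 n < 6) ->
  mapg M p g2 (mapg M p g1 v) = mapg M p (fun n => g2 (g1 n)) v.
Proof.
move=> hg; case E: (pickp M p v) => [a|]; last by rewrite /mapg !E.
have [h1 h2] := K7 E.
have hl := proj1 (K2 h1).
have [h3 h4] := K3 h1 (hg _ hl).
have e1 : mapg M p g1 v = shiftv a (g1 (loc a v)) by rewrite /mapg E.
by rewrite e1 {1}/mapg (K6 h3 h2) h4 /mapg E.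
Qed.

Lemma mapg_good ml ms (M : {set gvert ml ms * gvert ml ms}) p t :
  lgood t ->
  [/\ forall v, mapg M p (tapp t) v = v \/ gadj v (mapg M p (tapp t) v),
      injective (mapg M p (tapp t)) &
      forall v, mapg M p (tapp t) (mapg M p (tapp t) v) = v -> mapg M p (tapp t) v = v].
Proof.
move=> hg.
have hb : forall n, n < 6 -> tapp t n < 6 by move=> n hn; case: (lgoodP hg hn).
split.
- move=> v; rewrite /mapg; case E: (pickp M p v) => [a|]; last by left.
  have [h1 _] := K7 E; have [hl hs] := K2 h1.
  case: (lgoodP hg hl) => hb1 [e|ad] _ _; first by left; rewrite e hs.
  right; have [h3 h4] := K3 h1 hb1.
  by rewrite -(K5 h1 h3) h4.
- move=> u v e.
  have := mapg_pick M p u hb; have := mapg_pick M p v hb; rewrite e => -> .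
  move: e; rewrite /mapg.
  case Eu: (pickp M p u) => [a|]; case Ev: (pickp M p v) => [b|]; try done.
  move=> e [ab]; subst b.
  have [h1 _] := K7 Eu; have [g1 _] := K7 Ev.
  have [hl _] := K2 h1; have [gl _] := K2 g1.
  have := congr1 (loc a) e.
  rewrite (proj2 (K3 h1 (hb _ hl))) (proj2 (K3 h1 (hb _ gl))).
  case: (lgoodP hg hl) => _ _ _ /(_ _ gl) hi /hi.
  exact: K4.
- move=> v; rewrite mapg_comp // /mapg.
  case E: (pickp M p v) => [a|] //.
  have [h1 _] := K7 E; have [hl hs] := K2 h1.
  move=> e; have := congr1 (loc a) e; rewrite (proj2 (K3 h1 (hb _ (hb _ hl)))).
  case: (lgoodP hg hl) => _ _ H _ /H ->. by rewrite hs.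
Qed.
Set Implicit Arguments. Unset Strict Implicit. Unset Printing Implicit Defensive.

Lemma AN ml ms (e : gvert ml ms * gvert ml ms) (a : gvert ml ms) :
  3 <= ml -> 2 <= ms -> gadj e.1 e.2 -> a.1 = anc1 e :> nat -> a.2 = anc2 e :> nat ->
  [/\ inrect a e.1, inrect a e.2, loc a e.1 = locE e e.1 & loc a e.2 = locE e e.2].
Proof.
case: e => [[u1 u2] [w1 w2]]; case: a => a1 a2.
rewrite /inrect /loc /locE /anc1 /anc2 /gadj /= => h1 h2 ha e1 e2.
have hu1 := ltn_ord u1; have hu2 := ltn_ord u2; have hw1 := ltn_ord w1; have hw2 := ltn_ord w2.
split; try lia.
Qed.

Lemma AN_ex ml ms (e : gvert ml ms * gvert ml ms) :
  exists a : gvert ml ms, a.1 = anc1 e :> nat /\ a.2 = anc2 e :> nat.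
Proof.
case: e => [[u1 u2] [w1 w2]].
exists (insubd u1 (anc1 ((u1, u2), (w1, w2))), insubd u2 (anc2 ((u1, u2), (w1, w2)))).
have hu1 := ltn_ord u1; have hu2 := ltn_ord u2.
rewrite /= !val_insubd /anc1 /anc2 /=.
split; case: ifP => // /negbT; rewrite -leqNgt => H; exfalso; move: H; lia.
Qed.

Lemma gadj_irr ml ms (u : gvert ml ms) : gadj u u = false.
Proof. case: u => u1 u2; rewrite /gadj /=; lia. Qed.

Lemma EF ml ms (e : gvert ml ms * gvert ml ms) :
  3 <= ml -> 2 <= ms -> gadj e.1 e.2 ->
  [/\ locE e e.1 < 6, locE e e.2 < 6, locE e e.1 != locE e e.2 & ladj (locE e e.1) (locE e e.2)].
Proof.
move=> h1 h2 ha; have [a [ea1 ea2]] := AN_ex e.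
have [r1 r2 l1 l2] := AN h1 h2 ha ea1 ea2.
rewrite -l1 -l2; split.
- exact: (proj1 (K2 r1)).
- exact: (proj1 (K2 r2)).
- apply/eqP => /(K4 r1 r2) E; by move: ha; rewrite E gadj_irr.
- by rewrite (K5 r1 r2).
Qed.

Lemma ph_kind ml ms (e : gvert ml ms * gvert ml ms) :
  3 <= ml -> 2 <= ms -> gadj e.1 e.2 -> ph e < 216 /\ kind (ph e) = ltype e.
Proof.
move=> h1 h2 ha; have [l1 l2 _ _] := EF h1 h2 ha.
rewrite /ph /kind /ltype; move: l1 l2.
move: (locE e e.1) (locE e e.2) (anc1 e) (anc2 e) => i j x y l1 l2.
rewrite /=; split; first lia.
congr pair; lia.
Qed.

Lemma lw_bound k s n : n < 6 -> lw (gad k) s n < 6.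
Proof.
move=> hn; elim: s => [|s IH] //=.
by case: (lgoodP (lgood_any k s) IH).
Qed.

Lemma mapg_ext ml ms (M : {set gvert ml ms * gvert ml ms}) p g v :
  (forall n, n < 6 -> g n = n) -> mapg M p g v = v.
Proof.
move=> hg; rewrite /mapg; case E: (pickp M p v) => [a|] //.
have [h1 _] := K7 E; have [hl hs] := K2 h1.
by rewrite hg.
Qed.

Lemma swap_min_max i j : i != j ->
  (if i == minn i j then maxn i j else if i == maxn i j then minn i j else i) = j /\
  (if j == minn i j then maxn i j else if j == maxn i j then minn i j else j) = i.
Proof.
move=> nij; rewrite /minn /maxn.
have nji : (j == i) = false by rewrite eq_sym (negbTE nij).
case: ltngtP => h /=; rewrite ?eqxx ?(negbTE nij) ?nji //.
Qed.

Definition Phi ml ms (M : {set gvert ml ms * gvert ml ms}) p (v : gvert ml ms) :=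
  mapg M p (lw (gad (kind p)) D) v.

Lemma PE1 ml ms (M : {set gvert ml ms * gvert ml ms}) p e :
  3 <= ml -> 2 <= ms -> gadj e.1 e.2 -> e \in M -> ph e = p ->
  Phi M p e.1 = e.2 /\ Phi M p e.2 = e.1.
Proof.
move=> h1 h2 ha hM hp.
have [a [ea1 ea2]] := AN_ex e.
have [r1 r2 l1 l2] := AN h1 h2 ha ea1 ea2.
have [b1 b2 nij aij] := EF h1 h2 ha.
have [_ hk] := ph_kind h1 h2 ha.
have hact : act M p a.
  apply/existsP; exists e; rewrite hM hp eqxx /= ea1 ea2 !eqxx //.
have aij' : ladj (minn (locE e e.1) (locE e e.2)) (maxn (locE e e.1) (locE e e.2)).
  rewrite /minn /maxn; case: ifP => _ //; by rewrite ladj_sym.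
have lt : minn (locE e e.1) (locE e e.2) < maxn (locE e e.1) (locE e e.2).
  by move: nij; lia.
have mx : maxn (locE e e.1) (locE e e.2) < 6 by rewrite gtn_max b1 b2.
have [s1 s2] := swap_min_max nij.
rewrite /Phi /mapg (K6 r1 hact) (K6 r2 hact) -hp hk /ltype l1 l2.
rewrite !gad_ok // s1 s2 -l1 -l2.
by rewrite (proj2 (K2 r1)) (proj2 (K2 r2)).
Qed.

Lemma PE2 ml ms (M : {set gvert ml ms * gvert ml ms}) p v :
  3 <= ml -> 2 <= ms -> (forall e, e \in M -> gadj e.1 e.2) ->
  (forall f, f \in M -> ph f = p -> v <> f.1 /\ v <> f.2) -> Phi M p v = v.
Proof.
move=> h1 h2 hadj hv; rewrite /Phi /mapg.
case E: (pickp M p v) => [a|] //.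
have [hr /existsP [f /and4P [hf /eqP hp /eqP ea1 /eqP ea2]]] := K7 E.
have ha := hadj f hf.
have [r1 r2 l1 l2] := AN h1 h2 ha (esym ea1) (esym ea2).
have [b1 b2 nij aij] := EF h1 h2 ha.
have [_ hk] := ph_kind h1 h2 ha.
have [hl hs] := K2 hr.
have [n1 n2] := hv f hf hp.
have d1 : loc a v != locE f f.1 by rewrite -l1; apply/eqP => /(K4 hr r1).
have d2 : loc a v != locE f f.2 by rewrite -l2; apply/eqP => /(K4 hr r2).
have aij' : ladj (minn (locE f f.1) (locE f f.2)) (maxn (locE f f.1) (locE f f.2)).
  rewrite /minn /maxn; case: ifP => _ //; by rewrite ladj_sym.
have lt : minn (locE f f.1) (locE f f.2) < maxn (locE f f.1) (locE f f.2).
  by move: nij; lia.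
have mx : maxn (locE f f.1) (locE f f.2) < 6 by rewrite gtn_max b1 b2.
rewrite -hp hk /ltype gad_ok //.
have -> : (loc a v == minn (locE f f.1) (locE f f.2)) = false.
  by rewrite /minn; case: ifP => _; apply/negbTE.
have -> : (loc a v == maxn (locE f f.1) (locE f f.2)) = false.
  by rewrite /maxn; case: ifP => _; apply/negbTE.
by [].
Qed.
Set Implicit Arguments. Unset Strict Implicit. Unset Printing Implicit Defensive.

Fixpoint cfg ml ms (M : {set gvert ml ms * gvert ml ms}) (t : nat) : config ml ms :=
  if t is t'.+1 then
    (fun r => mapg M (t' %/ D) (tapp (nth [::] (gad (kind (t' %/ D))) (t' %% D))) (cfg M t' r))
  else id.

Lemma valid_of ml ms (p : config ml ms) (s : gvert ml ms -> gvert ml ms) :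
  (forall v, s v = v \/ gadj v (s v)) -> injective s -> (forall v, s (s v) = v -> s v = v) ->
  injective p -> valid_move p (fun r => s (p r)).
Proof.
move=> h1 h2 h3 hp; split; [|split].
- by move=> r; apply: h1.
- by move=> r1 r2 /h2 /hp.
- move=> r1 r2 ne e1 e2; apply: ne.
  have : s (s (p r1)) = p r1 by rewrite e1.
  by move/h3; rewrite e1.
Qed.

Lemma cfg_inj ml ms (M : {set gvert ml ms * gvert ml ms}) t : injective (cfg M t).
Proof.
elim: t => [|t IH] /=; first by move=> ? ?.
have [_ hi _] := mapg_good M (t %/ D) (lgood_any (kind (t %/ D)) (t %% D)).
by move=> r1 r2 /hi /IH.
Qed.

Lemma cfg_valid ml ms (M : {set gvert ml ms * gvert ml ms}) t : valid_move (cfg M t) (cfg M t.+1).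
Proof.
have [h1 h2 h3] := mapg_good M (t %/ D) (lgood_any (kind (t %/ D)) (t %% D)).
exact: (valid_of h1 h2 h3 (@cfg_inj _ _ M t)).
Qed.

Lemma cfg_phase ml ms (M : {set gvert ml ms * gvert ml ms}) p s r : s <= D ->
  cfg M (p * D + s) r = mapg M p (lw (gad (kind p)) s) (cfg M (p * D) r).
Proof.
elim: s => [|s IH] hs.
  by rewrite addn0 mapg_ext.
rewrite addnS /=.
have -> : (p * D + s) %/ D = p by move: hs; rewrite /D; lia.
have -> : (p * D + s) %% D = s by move: hs; rewrite /D; lia.
rewrite IH; last by lia.
rewrite mapg_comp //.
by move=> n hn; apply: lw_bound.
Qed.

Definition spec ml ms (M : {set gvert ml ms * gvert ml ms}) (p : nat) (c : config ml ms) : Prop :=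
  (forall e, e \in M -> ph e < p -> c e.1 = e.2 /\ c e.2 = e.1) /\
  (forall v, (forall e, e \in M -> ph e < p -> v <> e.1 /\ v <> e.2) -> c v = v).

Lemma cfg_spec ml ms (M : {set gvert ml ms * gvert ml ms}) p :
  3 <= ml -> 2 <= ms -> disjoint_edges M -> spec M p (cfg M (p * D)).
Proof.
move=> h1 h2 [hadj hdis].
elim: p => [|p [IH1 IH2]]; first by split => // v _.
have E : forall r, cfg M (p.+1 * D) r = Phi M p (cfg M (p * D) r).
  by move=> r; rewrite mulSn addnC cfg_phase.
have neq : forall e f : gvert ml ms * gvert ml ms, ph e <> ph f -> e <> f.
  by move=> e f ne ef; apply: ne; rewrite ef.
split.
- move=> e he hp; rewrite !E.
  have side : forall f, f \in M -> ph f <> ph e -> (e.1 <> f.1 /\ e.1 <> f.2) /\ (e.2 <> f.1 /\ e.2 <> f.2).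
    by move=> f hf hne; have := hdis e f he hf (neq _ _ (nesym hne)); case=> *.
  case: (ltngtP (ph e) p) => hc.
  + have [-> ->] := IH1 e he hc.
    split; apply: (PE2 h1 h2 hadj) => f hf hfp; have := side f hf ltac:(lia); tauto.
  + by move: hp; lia.
  + rewrite !IH2.
    * exact: (PE1 h1 h2 (hadj e he) he hc).
    * move=> f hf hfp; have := side f hf ltac:(lia); tauto.
    * move=> f hf hfp; have := side f hf ltac:(lia); tauto.
- move=> v hv; rewrite E IH2; last by move=> e he hp; apply: hv => //; lia.
  apply: (PE2 h1 h2 hadj) => f hf hfp; apply: hv => //; lia.
Qed.

Theorem lemma2 : exists C : nat,
  forall (ml ms : nat), ms <= ml -> 3 <= ml -> 2 <= ms ->
  forall M : {set gvert ml ms * gvert ml ms}, disjoint_edges M ->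
  exists (k : nat) (c : nat -> config ml ms),
    [/\ k <= C, c 0 = id,
        (forall t, t < k -> valid_move (c t) (c t.+1)) &
        flip_result M (c k)].
Proof.
exists (216 * D) => ml ms _ h1 h2 M hM.
exists (216 * D), (cfg M); split => //.
- by move=> t _; apply: cfg_valid.
- have [hadj _] := hM.
  have [s1 s2] := cfg_spec 216 h1 h2 hM.
  split.
  + move=> e he; apply: s1 => //; exact: (proj1 (ph_kind h1 h2 (hadj e he))).
  + move=> v hv; apply: s2 => e he _; split => E; apply: hv; exists e => //; by [left|right].
Qed.
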